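(* Let $m\geq 1$, $a\ge 1$ and $n,p>1$ be integers, and let $G$ be an $r$-regular graph of order $m$. If $n\equiv 0\pmod 2$ or $apm\equiv 1\pmod 2$, then $G\circ aH_{n,p}$ is distance magic.
   Context: A graph $G$ on $v$ vertices is distance magic if there is a bijection $f:V(G)\to\{1,\ldots,v\}$ and a constant $k$ such that for every vertex $x$, $\sum_{y\in N(x)}f(y)=k$, where $N(x)$ is the set of neighbours of $x$. $H_{n,p}$ denotes the complete multipartite graph with $p$ partite sets each of size $n$; $aH$ denotes the disjoint union of $a$ copies of $H$. The lexicographic product $G\circ H$ has vertex set $V(G)\times V(H)$, with $(g,h)$ adjacent to $(g',h')$ iff either $gg'\in E(G)$, or $g=g'$ and $hh'\in E(H)$. *)

(* Defs.v *)
From mathcomp Require Import all_boot.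
Set Implicit Arguments. Unset Strict Implicit. Unset Printing Implicit Defensive.

Definition simple_graph (T : finType) (e : rel T) : Prop :=
  symmetric e /\ irreflexive e.

Definition nbhd (T : finType) (e : rel T) (x : T) : {set T} := [set y | e x y].

Definition regular (T : finType) (e : rel T) (r : nat) : Prop :=
  forall x : T, #|nbhd e x| = r.

Definition distance_magic (T : finType) (e : rel T) : Prop :=
  exists f : T -> nat,
    injective f /\ (forall x, 1 <= f x <= #|T|) /\
    exists k : nat, forall x : T, \sum_(y in nbhd e x) f y = k.

(* complete multipartite graph H_{n,p}: vertex (i, j) = j-th vertex of part i;
   p parts of size n *)
Definition Hnp (n p : nat) : rel ('I_p * 'I_n) :=
  fun x y => x.1 != y.1.

Definition copies (a : nat) (U : finType) (h : rel U) : rel ('I_a * U) :=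
  fun x y => (x.1 == y.1) && h x.2 y.2.

Definition lexprod (T U : finType) (g : rel T) (h : rel U) : rel (T * U) :=
  fun x y => g x.1 y.1 || ((x.1 == y.1) && h x.2 y.2).
Arguments Hnp n p : clear implicits.
Arguments copies a {U} h.

(* Main.v *)
Require Import Defs.
From mathcomp Require Import all_boot zify.
Set Implicit Arguments. Unset Strict Implicit. Unset Printing Implicit Defensive.
Definition sgE (q j k : nat) := if odd j then q.-1 - k else k.

Lemma sgE_sum q k l : k < q -> \sum_(0 <= j < l.*2) sgE q j k = l * q.-1.
Proof.
move=> kq; elim: l => [|l IH]; first by rewrite big_geq.
rewrite doubleS !big_nat_recr //= IH /sgE /= odd_double /=.
lia.
Qed.

Definition sgO (h j k : nat) :=
  if j == 0 then k
  else if j == 1 then (if k < h then k + h + 1 else k - h)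
  else if j == 2 then (if k < h then 2 * h - 1 - 2 * k else 4 * h - 2 * k)
  else if odd j then k else 2 * h - k.

Lemma sgO_sum h k l : k < 2 * h + 1 ->
  \sum_(0 <= j < l.*2 + 3) sgO h j k = 3 * h + l * (2 * h).
Proof.
move=> kq; elim: l => [|l IH].
  rewrite !big_nat_recr //= big_geq // /sgO /=.
  case: ifP => ?; lia.
have -> : l.+1.*2 + 3 = (l.*2 + 3).+1.+1 by rewrite doubleS.
rewrite !big_nat_recr //= IH /sgO /=.
rewrite !addn3 /= odd_double /=.
lia.
Qed.

Lemma sgE_lt q j k : k < q -> sgE q j k < q.
Proof. rewrite /sgE; case: (odd j); lia. Qed.
Lemma sgE_inj q j k k' : k < q -> k' < q -> sgE q j k = sgE q j k' -> k = k'.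
Proof. rewrite /sgE; case: (odd j); lia. Qed.
Lemma sgO_lt h j k : k < 2 * h + 1 -> sgO h j k < 2 * h + 1.
Proof. rewrite /sgO => ?; repeat (case: ifP => ?); lia. Qed.
Lemma sgO_inj h j k k' : k < 2 * h + 1 -> k' < 2 * h + 1 -> sgO h j k = sgO h j k' -> k = k'.
Proof. rewrite /sgO => ? ?; repeat (case: ifP => ?); lia. Qed.

Lemma divmod_eq (j j' q x x' : nat) : j*q + x + 1 = j'*q+x' + 1 -> x < q -> x' < q -> j = j'.
Proof. intros; nia. Qed.

Lemma bound_lem (j n q s : nat) : s < q -> j < n -> 0 < j*q + s + 1 <= q*n.
Proof. intros; nia. Qed.

Lemma sum_prod (A B : finType) (F : A * B -> nat) :
  \sum_x F x = \sum_a \sum_b F (a, b).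
Proof. by rewrite pair_bigA; apply: eq_bigr => -[]. Qed.

Lemma sum_if_eq (A : finType) (a0 : A) (F : A -> nat) :
  \sum_x (if a0 == x then F x else 0) = F a0.
Proof.
rewrite (bigD1 a0) //= eqxx big1 ?addn0 // => x /negbTE.
by rewrite eq_sym => ->.
Qed.

Lemma magic_of_sigma (a n p r q : nat) (T : finType) (e : rel T) (sg : nat -> nat -> nat) :
  irreflexive e -> regular e r ->
  q = #|{: T * ('I_a * 'I_p)}| ->
  (forall j k, j < n -> k < q -> sg j k < q) ->
  (forall j k k', j < n -> k < q -> k' < q -> sg j k = sg j k' -> k = k') ->
  (exists S, forall k, k < q -> \sum_(0 <= j < n) sg j k = S) ->
  distance_magic (lexprod e (copies a (Hnp n p))).
Proof.
move=> irr reg Hq Hlt Hinj [S HS].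
pose key (y : T * ('I_a * ('I_p * 'I_n))) : T * ('I_a * 'I_p) := (y.1, (y.2.1, y.2.2.1)).
have Hk : forall y, (enum_rank (key y) : nat) < q by move=> y; rewrite Hq.
pose f (y : T * ('I_a * ('I_p * 'I_n))) := y.2.2.2 * q + sg y.2.2.2 (enum_rank (key y)) + 1.
exists f; split.
  move=> [t [c [i j]]] [t' [c' [i' j']]]; rewrite /f /=.
  set k := enum_rank _; set k' := enum_rank _ => E.
  have lk := Hk (t, (c, (i, j))); have lk' := Hk (t', (c', (i', j'))).
  rewrite -/k in lk; rewrite -/k' in lk'.
  have l1 := Hlt j k (ltn_ord j) lk.
  have l2 := Hlt j' k' (ltn_ord j') lk'.
  have ejj : (j : nat) = j' by apply: (divmod_eq E l1 l2).
  have ej : j = j' by apply: val_inj.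
  subst j'.
  have ekk : (k : nat) = k'.
    apply: (Hinj j k k' (ltn_ord j) lk lk').
    by move/eqP: E; rewrite eqn_add2r eqn_add2l => /eqP.
  by move: ekk => /val_inj/enum_rank_inj [-> -> ->].
split.
  move=> [t [c [i j]]]; rewrite /f /=.
  have lk := Hk (t, (c, (i, j))).
  have l1 := Hlt j _ (ltn_ord j) lk.
  have cV : #|{: T * ('I_a * ('I_p * 'I_n))}| = q * n.
    rewrite Hq !card_prod !card_ord; nia.
  rewrite cV; exact: (bound_lem l1 (ltn_ord j)).
pose K := \sum_(0 <= j < n) (j * q) + S + n.
have Hg : forall t' c' i', \sum_(j' : 'I_n) f (t', (c', (i', j'))) = K.
  move=> t' c' i'; rewrite /f /key /=.
  have lk : (enum_rank (t', (c', i')) : nat) < q by rewrite Hq.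
  set k := enum_rank _ in lk *.
  rewrite -(big_mkord xpredT (fun j => j * q + sg j k + 1)) !big_split /= HS //.
  by rewrite sum_nat_const_nat subn0 muln1.
exists (r * (a * (p * K)) + (p.-1) * K) => -[t [c [i j]]].
rewrite big_mkcond /=.
rewrite (eq_bigr (fun y => (if e t y.1 then f y else 0) +
   (if (t == y.1) && ((c == y.2.1) && (i != y.2.2.1)) then f y else 0))); last first.
  move=> y _; rewrite inE /lexprod /copies /Hnp /=.
  case Ee: (e t y.1) => //=.
  have : t != y.1 by apply: contraTneq Ee => ->; rewrite irr.
  by move/negbTE => ->; rewrite addn0.
rewrite big_split /=; congr (_ + _).
  rewrite sum_prod.
  rewrite (eq_bigr (fun t' => if e t t' then a * (p * K) else 0)); last first.
    move=> t' _ /=; case: (e t t') => /=; last by rewrite big1 // => u _; rewrite big1.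
    rewrite sum_prod (eq_bigr (fun _ => p * K)) ?sum_nat_const ?card_ord //.
    move=> c' _; rewrite sum_prod (eq_bigr (fun _ => K)) ?sum_nat_const ?card_ord //.
  rewrite -big_mkcond /= -(reg t) -sum_nat_const.
  by apply: eq_bigl => t'; rewrite inE.
rewrite sum_prod.
rewrite (eq_bigr (fun t' => if t == t' then \sum_u (if (c == u.1) && (i != u.2.1) then f (t', u) else 0) else 0)); last first.
  by move=> t' _ /=; case: (t == t') => //=; rewrite big1.
rewrite sum_if_eq sum_prod.
rewrite (eq_bigr (fun c' => if c == c' then \sum_v (if i != v.1 then f (t, (c', v)) else 0) else 0)); last first.
  by move=> c' _ /=; case: (c == c') => //=; rewrite big1.
rewrite sum_if_eq sum_prod.
rewrite (eq_bigr (fun i' => if i != i' then K else 0)); last first.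
  move=> i' _ /=; case: (i != i') => /=; [exact: Hg | by rewrite big1].
rewrite -big_mkcond /=.
rewrite (eq_bigl (mem (predC1 i))) ?sum_nat_const ?cardC1 ?card_ord //.
by move=> i' /=; rewrite inE eq_sym.
Qed.
Theorem theorem12 (m a n p r : nat) (T : finType) (e : rel T) :
  1 <= m -> 1 <= a -> 1 < n -> 1 < p ->
  simple_graph e -> #|T| = m -> regular e r ->
  (n %% 2 = 0 \/ (a * p * m) %% 2 = 1) ->
  distance_magic (lexprod e (copies a (Hnp n p))).
Proof.
move=> m1 a1 n1 p1 [_ irr] cardT reg Hpar.
set q := #|{: T * ('I_a * 'I_p)}|.
have qE : q = m * (a * p) by rewrite /q !card_prod !card_ord cardT.
case: (boolP (odd n)) => [nodd | neven].
  have od : (a * p * m) %% 2 = 1.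
    by case: Hpar => // H; move: (modn2 n); rewrite H nodd.
  have [h qh] : exists h, q = 2 * h + 1 by exists q./2; rewrite qE; nia.
  have [l nl] : exists l, n = l.*2 + 3 by exists (n - 3)./2; move: (modn2 n); rewrite nodd /=; lia.
  apply: (@magic_of_sigma a n p r q T e (sgO h)) => //.
  - by move=> j k _; rewrite qh; apply: sgO_lt.
  - by move=> j k k' _; rewrite qh; apply: sgO_inj.
  - by exists (3 * h + l * (2 * h)) => k; rewrite qh nl; apply: sgO_sum.
have [l nl] : exists l, n = l.*2 by exists n./2; move: (modn2 n); rewrite (negbTE neven) /=; lia.
apply: (@magic_of_sigma a n p r q T e (sgE q)) => //.
- by move=> j k _; apply: sgE_lt.
- by move=> j k k' _; apply: sgE_inj.
- by exists (l * q.-1) => k kq; rewrite nl; apply: sgE_sum.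
Qed.
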